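(* Let $m,n,M$ be positive integers, let $c(0)>0$ be real, and define $c(k)=c(k-1)/2^{\frac{m+n}{m}}$ for $k\ge1$, $\hat c(0)=\lceil 2^Mc(0)\rceil/2^M$ and $\hat c(k)=\lceil 2^M\hat c(k-1)2^{-\frac{m+n}{m}}\rceil/2^M$ for $k\ge1$. Then for each integer $k\ge0$, $$c(k)\le\hat c(k)<c(k)+\frac1{2^M}\sum_{i=0}^k2^{-\frac{i(m+n)}{m}}<c(k)+\frac2{2^M}.$$ *)

(* Defs.v *)
From Stdlib Require Import Reals Lra Lia.
Open Scope R_scope.

Definition rho (m n : nat) : R := Rpower 2 (INR (m + n) / INR m).

Fixpoint c_seq (m n : nat) (c0 : R) (k : nat) : R :=
  match k with
  | O => c0
  | S k' => c_seq m n c0 k' / rho m n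
  end.

Fixpoint chat_seq (m n M : nat) (c0 : R) (k : nat) : R :=
  match k with
  | O => IZR (Zceil (2 ^ M * c0)) / 2 ^ M
  | S k' => IZR (Zceil (2 ^ M * chat_seq m n M c0 k' * Rpower 2 (- (INR (m + n) / INR m)))) / 2 ^ M
  end.

(* Main.v *)
Require Import Defs.
From Stdlib Require Import Reals Lra.
Open Scope R_scope.

Lemma ceil_lem (P y : R) : 0 < P -> y <= IZR (Zceil (P * y)) / P < y + / P.
Proof.
  intros HP. destruct (Zceil_bound (P*y)) as [H1 H2].
  set (z := IZR (Zceil (P*y))) in *.
  split.
  - apply (Rmult_le_reg_r P); auto. unfold Rdiv. rewrite Rmult_assoc, Rinv_l by lra. lra.
  - apply (Rmult_lt_reg_r P); auto. unfold Rdiv. rewrite Rmult_assoc, Rinv_l by lra.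
    rewrite Rmult_plus_distr_r, Rinv_l by lra. lra.
Qed.

Theorem lemma5 (m n M : nat) (c0 : R) (k : nat) :
  (0 < m)%nat -> (0 < n)%nat -> (0 < M)%nat -> 0 < c0 ->
  c_seq m n c0 k <= chat_seq m n M c0 k /\
  chat_seq m n M c0 k <
    c_seq m n c0 k + / 2 ^ M * sum_f_R0 (fun i => Rpower 2 (- (INR i * INR (m + n) / INR m))) k /\
  c_seq m n c0 k + / 2 ^ M * sum_f_R0 (fun i => Rpower 2 (- (INR i * INR (m + n) / INR m))) k <
    c_seq m n c0 k + 2 / 2 ^ M.
Proof.
  intros Hm Hn HM Hc.
  set (q := INR (m + n) / INR m).
  set (a := Rpower 2 (- q)).
  assert (Hq : 1 <= q).
  { unfold q. assert (0 < INR m) by (apply lt_0_INR; auto).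
    apply (Rmult_le_reg_r (INR m)); auto. unfold Rdiv.
    rewrite Rmult_assoc, Rinv_l by lra. rewrite Rmult_1_l, plus_INR.
    assert (0 <= INR n) by apply pos_INR. lra. }
  assert (Ha0 : 0 < a) by (unfold a, Rpower; apply exp_pos).
  assert (Ha2 : a <= / 2).
  { unfold a. rewrite <- (Rpower_1 2) at 2 by lra. rewrite <- Rpower_Ropp.
    apply Rle_Rpower; lra. }
  assert (Hterm : forall i, Rpower 2 (- (INR i * INR (m + n) / INR m)) = a ^ i).
  { intro i. unfold a. rewrite <- Rpower_pow by (unfold Rpower; apply exp_pos).
    rewrite Rpower_mult. f_equal. unfold q, Rdiv. ring. }
  set (Ss := fun k => sum_f_R0 (fun i => a ^ i) k).
  assert (HSe : forall k, sum_f_R0 (fun i => Rpower 2 (- (INR i * INR (m + n) / INR m))) k = Ss k).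
  { intro k0. unfold Ss. apply sum_eq. intros. apply Hterm. }
  assert (HS : forall k, Ss (S k) = 1 + a * Ss k).
  { induction k0 as [|k0 IH].
    - unfold Ss; simpl. ring.
    - unfold Ss in *; cbv beta in *. simpl in *. rewrite Rmult_plus_distr_l. lra. }
  assert (HS2 : forall k, Ss k < 2).
  { induction k0 as [|k0 IH].
    - unfold Ss; simpl. lra.
    - rewrite HS. assert (0 <= Ss k0).
      { unfold Ss. apply cond_pos_sum. intro. apply pow_le. lra. }
      nra. }
  assert (HP : 0 < 2 ^ M) by (apply pow_lt; lra).
  assert (Hrho : forall x, x / rho m n = x * a).
  { intro. unfold rho, a. fold q. rewrite Rpower_Ropp. reflexivity. }
  assert (Hmain : c_seq m n c0 k <= chat_seq m n M c0 k /\
          chat_seq m n M c0 k < c_seq m n c0 k + / 2 ^ M * Ss k).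
  { induction k as [|k IH].
    - simpl. destruct (ceil_lem (2^M) c0 HP). unfold Ss; simpl. lra.
    - simpl. fold q. fold a. rewrite Hrho.
      destruct (ceil_lem (2^M) (chat_seq m n M c0 k * a) HP) as [H1 H2].
      rewrite Rmult_assoc. rewrite HS. destruct IH as [I1 I2].
      split; nra. }
  destruct Hmain as [H1 H2]. rewrite HSe. split; [|split]; auto.
  specialize (HS2 k). assert (0 < / 2 ^ M) by (apply Rinv_0_lt_compat; auto).
  unfold Rdiv. nra.
Qed.
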